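(* Let $\mathbf a=(a_1,\dots,a_k)$ be a sequence of nonnegative integers and $1\le \ell\le k$. There is a bijection between $D(a_1,\dots,a_k)$ and $\hat D_\ell(a_1,\dots,a_{\ell-1},a_\ell+1,a_{\ell+1},\dots,a_k)$.
   Context: For $\mathbf a=(a_1,\dots,a_k)$ with nonnegative integer entries summing to $n$, put $c_0=0$, $c_j=a_1+\dots+a_j$, and let the $j$-th block be $A_j=\{c_{j-1}+1,\dots,c_j\}$. Let $S_{\mathbf a}\subseteq S_n$ be the set of permutations $\pi$ of $[n]$ with $\pi_i>\pi_{i+1}$ whenever $i,i+1$ lie in the same block. A fixed point is an $i$ with $\pi_i=i$. $D(\mathbf a)$ is the set of derangements in $S_{\mathbf a}$, and $\hat D_\ell(\mathbf a)$ is the set of permutations in $S_{\mathbf a}$ that have a fixed point in $A_\ell$ but no fixed point in any other block. *)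

(* Defs.v *)
From mathcomp Require Import all_boot all_fingroup.
Set Implicit Arguments. Unset Strict Implicit. Unset Printing Implicit Defensive.

(* Positions of [n] are represented by ordinals i : 'I_n, position i <-> i+1.
   Blocks are indexed 1..size a:  A_j = {c_{j-1}+1, ..., c_j} with
   c_j = a_1 + ... + a_j. *)
Definition pref (a : seq nat) (j : nat) : nat := sumn (take j a).

Definition in_block (a : seq nat) (j p : nat) : bool :=
  (0 < j <= size a) && (pref a j.-1 < p <= pref a j).

Definition descents_ok (a : seq nat) (s : 'S_(sumn a)) : bool :=
  [forall i : 'I_(sumn a), forall i' : 'I_(sumn a),
     ((i' == i.+1 :> nat) &&
      [exists j : 'I_(size a).+1, in_block a j i.+1 && in_block a j i'.+1])
     ==> (s i' < s i)].

Definition Sa (a : seq nat) : {set 'S_(sumn a)} := [set s | descents_ok s].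

Definition D (a : seq nat) : {set 'S_(sumn a)} :=
  [set s in Sa a | [forall i, s i != i]].

Definition Dhat (l : nat) (a : seq nat) : {set 'S_(sumn a)} :=
  [set s in Sa a | [exists i, (s i == i) && in_block a l i.+1]
                && [forall i, (s i == i) ==> in_block a l i.+1]].

Definition incr_at (a : seq nat) (l : nat) : seq nat :=
  set_nth 0 a l.-1 (nth 0 a l.-1).+1.

(* Main.v *)
Require Import Defs.
From mathcomp Require Import all_boot all_fingroup.
From mathcomp Require Import zify.

Lemma pref0 a : pref a 0 = 0. Proof. by rewrite /pref take0. Qed.
Lemma pref_over a j : size a <= j -> pref a j = sumn a.
Proof. by move=> h; rewrite /pref take_oversize. Qed.
Lemma prefS a j : j < size a -> pref a j.+1 = pref a j + nth 0 a j.
Proof. by move=> h; rewrite /pref (take_nth 0 h) sumn_rcons. Qed.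
Lemma pref_mono a j k : j <= k -> pref a j <= pref a k.
Proof.
move=> /subnK <-; elim: (k - j) => [|d IH]; first by rewrite add0n.
rewrite addSn; case: (ltnP (d + j) (size a)) => h.
  by rewrite prefS //; lia.
have h2 : size a <= (d+j).+1 by lia. by rewrite (@pref_over a _ h2) (@pref_over a _ h) in IH *; lia.
Qed.

Definition cutb a m := has (fun j => pref a j == m) (iota 0 (size a).+1).

Lemma cutbP a m : reflect (exists2 j, j <= size a & pref a j = m) (cutb a m).
Proof.
apply: (iffP hasP) => [[j]|[j hj e]].
  by rewrite mem_iota add0n ltnS => hj /eqP e; exists j.
by exists j; [rewrite mem_iota add0n ltnS | apply/eqP].
Qed.

Lemma blockE a i : i.+1 < sumn a ->
  [exists j : 'I_(size a).+1, in_block a j i.+1 && in_block a j i.+2] = ~~ cutb a i.+1.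
Proof.
move=> hi; apply/existsP/idP.
  case=> j /andP [] /andP [/andP [j0 js] /andP [h1 h2]] /andP [_ /andP [h3 h4]].
  apply/negP => /cutbP [j' hj' e].
  case: (leqP j' j.-1) => hjj.
    by have := pref_mono a _ _ hjj; lia.
  have : j <= j' by lia.
  move=> /(pref_mono a _ _); lia.
move=> hc.
have ex : exists j, i.+1 < pref a j by exists (size a); rewrite pref_over.
case: (ex_minnP ex) => j hj hmin.
have js : j <= size a by apply: hmin; rewrite pref_over.
have j0 : 0 < j by move: hj; case: (j) => //; rewrite pref0.
have hle : pref a j.-1 <= i.+1.
  rewrite leqNgt; apply/negP => /hmin; lia.
have hne : pref a j.-1 != i.+1.
  apply/negP => /eqP e; move/negP: hc; apply; apply/cutbP; exists j.-1 => //; lia.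
have hlt : pref a j.-1 < i.+1 by rewrite ltn_neqAle hne hle.
exists (Ordinal (js : j < (size a).+1)); rewrite /in_block /=.
apply/andP; split; apply/andP; split; lia.
Qed.

Lemma pref_set a k j : k < size a ->
  pref (set_nth 0 a k (nth 0 a k).+1) j = pref a j + (k < j).
Proof.
rewrite /pref; elim: a k j => [|x a IH] k j //= hk.
case: j => [|j]; first by rewrite !take0 /= addn0.
case: k hk => [|k] hk /=.
  lia.
by rewrite IH // addnA.
Qed.

Lemma size_incr a k : k < size a -> size (set_nth 0 a k (nth 0 a k).+1) = size a.
Proof. by move=> h; rewrite size_set_nth; apply/maxn_idPr. Qed.

Lemma cutb_incr a k m : k < size a ->
  cutb (set_nth 0 a k (nth 0 a k).+1) m =
  if m <= pref a k then cutb a m else if m <= pref a k.+1 then false else cutb a m.-1.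
Proof.
move=> hk.
have mk := pref_mono a k k.+1 (leqnSn k).
case: ifP => h1.
  apply/cutbP/cutbP => [[j hj]|[j hj e]].
    rewrite size_incr // in hj; rewrite pref_set //.
    case: (ltnP k j) => hkj /=.
      by have := pref_mono a _ _ hkj; lia.
    by rewrite addn0; exists j.
  case: (leqP j k) => hjk.
    by exists j; rewrite ?size_incr // pref_set // ltnNge hjk addn0.
  exists k; rewrite ?size_incr ?pref_set ?ltnn ?addn0 //; try lia.
  have := pref_mono a _ _ (ltnW hjk); lia.
case: ifP => h2.
  apply/negP => /cutbP [j hj]; rewrite pref_set //.
  case: (ltnP k j) => hkj /=.
    by have := pref_mono a _ _ hkj; lia.
  by have := pref_mono a _ _ hkj; lia.
apply/cutbP/cutbP => [[j hj]|[j hj e]].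
  rewrite size_incr // in hj; rewrite pref_set //.
  case: (ltnP k j) => hkj /= e.
    by exists j => //; lia.
  by have := pref_mono a _ _ hkj; lia.
case: (ltnP k j) => hkj.
  by exists j; rewrite ?size_incr // pref_set // hkj; lia.
exists k.+1; rewrite ?size_incr ?pref_set ?ltnSn //.
have := pref_mono a _ _ hkj; lia.
Qed.

Lemma sumn_incr a k : k < size a -> sumn (set_nth 0 a k (nth 0 a k).+1) = (sumn a).+1.
Proof.
move=> hk; have := pref_set a k (size a) hk.
rewrite (@pref_over a (size a)) // pref_over ?size_incr // hk; lia.
Qed.

Definition pos (t : nat -> nat) P k := P + find (fun q => t q <= q) (iota P k).

Lemma posS t P k : pos t P k.+1 = if t P <= P then P else pos t P.+1 k.
Proof. rewrite /pos /=; case: ifP => _; lia. Qed.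

Lemma pos0 t P : pos t P 0 = P.
Proof. by rewrite /pos /= addn0. Qed.

Lemma pos_props t P k : let p := pos t P k in
  [/\ P <= p <= P + k, (forall q, P <= q < p -> q < t q) & (p < P + k -> t p <= p)].
Proof.
elim: k P => [|k IH] P /=.
  rewrite pos0; split; [lia | lia | lia].
rewrite posS; case: ifP => h.
  split; [lia | lia | by []].
have [h1 h2 h3] := IH P.+1; split; first lia.
  move=> q hq; case: (ltnP P q) => hPq; first by apply: h2; lia.
  have -> : q = P by lia.
  by rewrite ltnNge h.
move=> hp; apply: h3; lia.
Qed.

Lemma pos_spec t P k p : P <= p <= P + k -> (forall q, P <= q < p -> q < t q) ->
  (p < P + k -> t p <= p) -> pos t P k = p.
Proof.
elim: k P => [|k IH] P hp hlt hle.
  by rewrite pos0; lia.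
rewrite posS; case: ifP => h.
  case: (ltnP P p) => hP; last by lia.
  have := hlt P; lia.
case: (ltnP P p) => hP.
  apply: IH => //; [lia | move=> q hq; apply: hlt; lia | move=> hq; apply: hle; lia].
have ep : p = P by lia.
by move: h; rewrite -ep hle //; lia.
Qed.

Definition sh p i := if i < p then i else i.+1.
Definition dn p v := if v < p then v else v.-1.
Definition ush p q := if q < p then q else q.-1.
Definition insf p (t : nat -> nat) q := if q == p then p else sh p (t (ush p q)).
Definition delf p (u : nat -> nat) i := dn p (u (sh p i)).

Ltac crush := repeat (case: ifP => ?); try lia.

Lemma shE p i : sh p i = i + (p <= i). Proof. rewrite /sh; crush. Qed.
Lemma dnE p v : dn p v = v - (p <= v). Proof. rewrite /dn; crush. Qed.
Lemma ushE p i : ush p i = i - (p <= i). Proof. rewrite /ush; crush. Qed.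
Lemma ush_sh p i : ush p (sh p i) = i. Proof. rewrite ushE shE; case: (leqP p i) => h /=; lia. Qed.
Lemma sh_ush p q : q != p -> sh p (ush p q) = q. Proof. rewrite ushE shE; case: (ltngtP p q) => h /=; lia. Qed.
Lemma dn_sh p v : dn p (sh p v) = v. Proof. rewrite dnE shE; case: (leqP p v) => h /=; lia. Qed.
Lemma sh_dn p v : v != p -> sh p (dn p v) = v. Proof. rewrite dnE shE; case: (ltngtP p v) => h /=; lia. Qed.
Lemma sh_neq p i : (sh p i == p) = false. Proof. rewrite shE; case: (leqP p i) => h /=; lia. Qed.

Definition desc n (c : nat -> bool) (f : nat -> nat) :=
  forall i, i.+1 < n -> ~~ c i.+1 -> f i.+1 < f i.

Definition setting n P E (cA cB : nat -> bool) :=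
  [/\ P <= E <= n, cA P, cA E, (forall m, P < m < E -> ~~ cA m)
    & (forall m, cB m = if m <= P then cA m else if m <= E then false else cA m.-1)].

Definition goodf n (t : nat -> nat) :=
  (forall i, i < n -> t i < n) /\ (forall i j, i < n -> j < n -> t i = t j -> i = j).

Lemma delf_insf p t i : delf p (insf p t) i = t i.
Proof. by rewrite /delf /insf sh_neq ush_sh dn_sh. Qed.

Lemma insf_delf n p u q : goodf n.+1 u -> p < n.+1 -> u p = p -> q < n.+1 ->
  insf p (delf p u) q = u q.
Proof.
move=> [ul ui] hp up hq; rewrite /insf /delf.
case: eqP => e; first by rewrite e up.
have hne : u q != p by apply/eqP => h; apply: e; apply: ui => //; rewrite up.
by rewrite sh_ush ?sh_dn //; apply/eqP.
Qed.

Lemma ins_props n P E cA cB t : setting n P E cA cB -> goodf n t ->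
  (forall i, i < n -> t i != i) -> desc n cA t ->
  let p := pos t P (E - P) in
  [/\ P <= p <= E, goodf n.+1 (insf p t), desc n.+1 cB (insf p t),
     (forall q, q < n.+1 -> (insf p t q == q) = (q == p))
   & pos (insf p t) P (E.+1 - P) = p].
Proof.
move=> [/andP [hPE hEn] cAP cAE cAm cBE] [tl ti] td tdesc p.
have [/andP [hp1 hp2] hpq hpt] := pos_props t P (E - P).
rewrite -/p in hp1 hp2 hpq hpt.
have hp2' : p <= E by lia.
have valq : forall q, q != p -> insf p t q = sh p (t (ush p q)).
  by move=> q hq; rewrite /insf (negbTE hq).
have valp : insf p t p = p by rewrite /insf eqxx.
split; first by apply/andP.
- split.
  + move=> q hq; case: (eqVneq q p) => [->|hqp]; first by rewrite valp; lia.
    rewrite valq // shE; have := tl (ush p q); rewrite ushE; case: (leqP p q) => h /=; lia.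
  + move=> q1 q2 h1 h2; case: (eqVneq q1 p) => [->|hq1]; case: (eqVneq q2 p) => [->|hq2] //.
    * by rewrite valp valq // => /eqP; rewrite eq_sym sh_neq.
    * by rewrite valp valq // => /eqP; rewrite sh_neq.
    rewrite !valq // => e.
    have e2 : t (ush p q1) = t (ush p q2) by rewrite -(dn_sh p (t (ush p q1))) e dn_sh.
    have := ti _ _ _ _ e2; rewrite !ushE.
    move: hq1 hq2; case: (ltngtP p q1) => a1; case: (ltngtP p q2) => a2 /=; lia.
- move=> q hq hc; rewrite cBE in hc.
  case: (ltngtP q.+1 p) => hqp.
  + have hc' : ~~ cA q.+1.
      move: hc; case: ifP => h1; first by [].
      by move=> _; apply: cAm; lia.
    rewrite !valq; try lia.
    have := tdesc q ltac:(lia) hc'; rewrite !shE !ushE.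
    rewrite (_ : p <= q.+1 = false); last lia.
    rewrite (_ : p <= q = false); last lia.
    move=> h; rewrite !subn0.
    case: (leqP p (t q)) => a1; case: (leqP p (t q.+1)) => a2 /=; lia.
  + case: (eqVneq q p) => [eqp|hqpp].
      have hpE : p < E.
        case: (ltnP p E) => // h; have ep : p = E by lia.
        move: hc; rewrite eqp ep (_ : E.+1 <= P = false); last lia.
        by rewrite (_ : E.+1 <= E = false) /=; [rewrite cAE | lia].
      have := hpt ltac:(lia); have := td p ltac:(lia).
      rewrite eqp valp valq; last by rewrite -[p.+1 == p]/(p.+1 == p); lia.
      rewrite shE ushE (_ : p <= p.+1 = true); last lia.
      rewrite (_ : p.+1 - true = p); last lia.
      move=> h1 h2; case: (leqP p (t p)) => a1 /=; lia.
    have hc' : ~~ cA q.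
      move: hc; case: ifP => h1; first lia.
      case: ifP => h2; last by rewrite (_ : q.+1.-1 = q).
      by move=> _; apply: cAm; lia.
    rewrite !valq; try lia.
    have hq1 : q.-1.+1 = q by lia.
    have := tdesc q.-1 ltac:(lia) ltac:(by rewrite hq1).
    rewrite hq1 !shE !ushE.
    rewrite (_ : p <= q.+1 = true); last lia.
    rewrite (_ : p <= q = true); last lia.
    rewrite (_ : q.+1 - true = q); last lia.
    move=> h.
    have e1 : q - true = q.-1 by rewrite subn1. rewrite e1.
    case: (leqP p (t q)) => a1; case: (leqP p (t q.-1)) => a2 /=; lia.
  +
    have hPp : P < p.
      case: (ltnP P p) => // h; have ep : p = P by lia.
      move: hc; rewrite (_ : q < P = true); last lia.
      by rewrite (_ : q.+1 = P) ?cAP //; lia.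
    rewrite hqp valp valq; last lia.
    have := hpq q ltac:(lia); rewrite shE ushE (_ : p <= q = false) ?subn0; last lia.
    move=> h; case: (leqP p (t q)) => a1 /=; lia.
- move=> q hq; case: (eqVneq q p) => [->|hqp]; first by rewrite valp !eqxx.
  rewrite valq //; apply/eqP => e.
  have hu : ush p q < n by rewrite ushE; case: (leqP p q) => /= h; lia.
  have := td _ hu; move: e; rewrite shE ushE.
  case: (leqP p q) => a1 /=; case: (leqP p (t (q - _))) => a2 /= e /eqP; lia.
- apply: pos_spec; first lia.
    move=> q hq; rewrite valq; last lia.
    have := hpq q hq; rewrite shE ushE (_ : p <= q = false) ?subn0; last lia.
    case: (leqP p (t q)) => /= a; lia.
  by rewrite valp.
Qed.

Lemma sh_lt p i : i < p -> sh p i = i. Proof. by rewrite /sh => ->. Qed.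
Lemma sh_ge p i : p <= i -> sh p i = i.+1. Proof. by rewrite /sh ltnNge => ->. Qed.
Lemma dn_lt p v : v < p -> dn p v = v. Proof. by rewrite /dn => ->. Qed.
Lemma dn_gt p v : p < v -> dn p v = v.-1. Proof. by rewrite /dn => h; rewrite ltnNge (ltnW h). Qed.

Lemma dn_mono p x y : x < y -> x != p -> y != p -> dn p x < dn p y.
Proof.
rewrite !dnE => h hx hy; case: (leqP p x) => a; case: (leqP p y) => b /=; lia.
Qed.

Lemma del_props n P E cA cB u f0 : setting n P E cA cB -> goodf n.+1 u ->
  desc n.+1 cB u -> P <= f0 <= E -> u f0 = f0 ->
  (forall q, q < n.+1 -> u q = q -> P <= q <= E) ->
  let p := pos u P (E.+1 - P) in
  [/\ p = f0, goodf n (delf p u), (forall i, i < n -> delf p u i != i),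
      desc n cA (delf p u) & pos (delf p u) P (E - P) = p].
Proof.
move=> [/andP [hPE hEn] cAP cAE cAm cBE] [ul ui] udesc /andP [hf1 hf2] uf0 ufix.
have dec : forall q r, P <= q -> q <= r -> r <= E -> u r + (r - q) <= u q.
  have gen : forall d q, P <= q -> q + d <= E -> u (q + d) + d <= u q.
    elim=> [|d IH] q hq hd; first by rewrite !addn0.
    have := IH q hq ltac:(lia).
    have hc : ~~ cB (q + d).+1.
      rewrite cBE; case: ifP => h1; first lia.
      by case: ifP => h2 //; lia.
    have := udesc (q + d) ltac:(lia) hc.
    rewrite -(addnS q d); lia.
  move=> q r hq hqr hr; have := gen (r - q) q hq ltac:(lia).
  by rewrite subnKC.
have ep : pos u P (E.+1 - P) = f0.
  apply: pos_spec; first lia.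
    by move=> q hq; have := dec q f0 ltac:(lia) ltac:(lia) hf2; lia.
  by rewrite uf0.
cbv zeta; rewrite ep.
move: uf0 hf1 hf2; move: (f0) => p uf0 hf1 hf2.
have une : forall x, x < n.+1 -> x != p -> u x != p.
  move=> x hx hxp; apply/eqP => e; move/eqP: hxp; apply; apply: ui => //; first lia.
  by rewrite e uf0.
have shn : forall i, i < n -> sh p i < n.+1 by move=> i hi; rewrite shE; lia.
have shp : forall i, sh p i != p by move=> i; rewrite sh_neq.
split => //.
- split.
  + move=> i hi; rewrite /delf.
    have := une _ (shn i hi) (shp i); have := ul _ (shn i hi); rewrite dnE.
    case: (leqP p (u (sh p i))) => a /= bb /eqP c; lia.
  + move=> i j hi hj; rewrite /delf => e.
    have e2 : u (sh p i) = u (sh p j).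
      by rewrite -(sh_dn _ _ (une _ (shn i hi) (shp i))) e (sh_dn _ _ (une _ (shn j hj) (shp j))).
    have e3 := ui _ _ (shn i hi) (shn j hj) e2.
    by rewrite -(ush_sh p i) e3 ush_sh.
- move=> i hi; apply/eqP; rewrite /delf => e.
  have := une _ (shn i hi) (shp i); move: e; rewrite dnE shE.
  case: (leqP p i) => a /=.
  + have := ul (i + 1) ltac:(lia).
    case: (leqP p (u (i + 1))) => bb hu /= e c; last lia.
    have fx : u (i + 1) = i + 1 by lia.
    have := ufix (i + 1) ltac:(lia) fx; move=> /andP [_ h2].
    have := dec p (i + 1) hf1 ltac:(lia) h2; rewrite fx uf0; lia.
  + rewrite addn0; case: (leqP p (u i)) => bb /= e /eqP c; last first.
      have := ufix i ltac:(lia) ltac:(lia) => /andP [h1 _].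
      have := dec i p h1 ltac:(lia) hf2; rewrite uf0; lia.
    lia.
- move=> i hi hc; rewrite /delf.
  case: (ltngtP i.+1 p) => hip.
  + rewrite [sh p i.+1]sh_lt; last lia.
    rewrite [sh p i]sh_lt; last lia.
    apply: dn_mono.
    * apply: udesc; first lia.
      rewrite cBE; case: ifP => // h1; case: ifP => // h2; lia.
    * apply: une; lia.
    * apply: une; lia.
  + rewrite [sh p i.+1]sh_ge; last lia.
    rewrite [sh p i]sh_ge; last lia.
    apply: dn_mono.
    * apply: udesc; first lia.
      rewrite cBE; case: ifP => h1; first lia.
      by case: ifP => // h2.
    * apply: une; lia.
    * apply: une; lia.
  + subst p.
    have hPp : P < i.+1.
      case: (ltnP P i.+1) => // h; have e : i.+1 = P by lia.
      by move: hc; rewrite e cAP.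
    have hpE : i.+1 < E.
      case: (ltnP i.+1 E) => // h; have e : i.+1 = E by lia.
      by move: hc; rewrite e cAE.
    rewrite [sh _ i.+1]sh_ge; last lia.
    rewrite [sh _ i]sh_lt; last lia.
    have d1 := dec i i.+1 ltac:(lia) ltac:(lia) ltac:(lia).
    have d2 := dec i.+1 i.+2 ltac:(lia) ltac:(lia) ltac:(lia).
    rewrite uf0 in d1 d2.
    rewrite dn_lt; last lia.
    rewrite dn_gt; last lia.
    lia.
- apply: pos_spec; first lia.
    move=> q hq; rewrite /delf sh_lt; last lia.
    have := dec q p ltac:(lia) ltac:(lia) hf2; rewrite uf0 => h.
    rewrite dn_gt; lia.
  move=> hpE; rewrite /delf sh_ge // .
  have := dec p p.+1 hf1 ltac:(lia) ltac:(lia); rewrite uf0 => h.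
  rewrite dn_lt; lia.
Qed.

Lemma pos_ext f g P k : (forall q, P <= q < P + k -> f q = g q) -> pos f P k = pos g P k.
Proof.
elim: k P => [|k IH] P H; first by rewrite !pos0.
rewrite !posS H; last lia.
case: ifP => // _; apply: IH => q hq; apply: H; lia.
Qed.

Lemma insf_ext n p t t' q : p <= n -> (forall i, i < n -> t i = t' i) -> q < n.+1 ->
  insf p t q = insf p t' q.
Proof.
move=> hp H hq; rewrite /insf; case: eqP => // hqp.
rewrite H // ushE; case: (leqP p q) => /= h; lia.
Qed.

Lemma delf_ext n p u u' i : (forall q, q < n.+1 -> u q = u' q) -> i < n ->
  delf p u i = delf p u' i.
Proof. move=> H hi; rewrite /delf H // shE; lia. Qed.

Lemma setting_ok a k : k < size a ->
  setting (sumn a) (pref a k) (pref a k.+1) (cutb a) (cutb (set_nth 0 a k (nth 0 a k).+1)).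
Proof.
move=> hk; split.
- apply/andP; split; first exact: pref_mono.
  by rewrite -(pref_over a (size a) (leqnn _)); apply: pref_mono.
- by apply/cutbP; exists k => //; lia.
- by apply/cutbP; exists k.+1.
- move=> m hm; apply/negP => /cutbP [j hj e].
  case: (leqP j k) => h.
    by have := pref_mono a _ _ h; lia.
  by have := pref_mono a _ _ h; lia.
- by move=> m; apply: cutb_incr.
Qed.

Set Implicit Arguments. Unset Strict Implicit.

Definition natf n (s : 'S_n) (i : nat) : nat :=
  if insub i is Some o then val (s o) else i.

Lemma natfE n (s : 'S_n) (o : 'I_n) : natf s o = s o.
Proof. by rewrite /natf valK. Qed.

Lemma natf_lt n (s : 'S_n) i : i < n -> natf s i < n.
Proof. by move=> h; rewrite -[i]/(val (Ordinal h)) natfE. Qed.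

Lemma natf_inj n (s : 'S_n) i j : i < n -> j < n -> natf s i = natf s j -> i = j.
Proof.
move=> hi hj; rewrite -[i]/(val (Ordinal hi)) -[j]/(val (Ordinal hj)) !natfE.
by move/val_inj/perm_inj => ->.
Qed.

Lemma descP a (s : 'S_(sumn a)) :
  reflect (forall i, i.+1 < sumn a -> ~~ cutb a i.+1 -> natf s i.+1 < natf s i)
          (descents_ok s).
Proof.
apply: (iffP forallP) => H.
  move=> i hi hc; have hi0 : i < sumn a by lia.
  move/forallP: (H (Ordinal hi0)) => /(_ (Ordinal hi)) /implyP.
  rewrite -[i.+1]/(val (Ordinal hi)) -[i]/(val (Ordinal hi0)) !natfE; apply.
  rewrite /= eqxx /=; have := blockE a i hi; rewrite hc; by move=> h; exact: h.
move=> i; apply/forallP => i'; apply/implyP => /andP [/eqP ei' hb].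
have hi : i.+1 < sumn a by rewrite -ei'.
have hb2 : ~~ cutb a i.+1 by rewrite -(blockE a i hi); rewrite ei' in hb; exact: hb.
by have := H i hi hb2; rewrite -ei' !natfE.
Qed.

Definition mkperm N (g : nat -> nat) : 'S_N :=
  insubd (1%g : 'S_N) [ffun o : 'I_N => insubd o (g o)].

Lemma mkpermE N g : (forall i, i < N -> g i < N) ->
  (forall i j, i < N -> j < N -> g i = g j -> i = j) ->
  forall i, i < N -> natf (mkperm N g) i = g i.
Proof.
move=> Hlt Hinj i hi; rewrite -[i]/(val (Ordinal hi)) natfE.
have inj : injectiveb [ffun o : 'I_N => insubd o (g o)].
  apply/injectiveP => x y; rewrite !ffunE => /(congr1 val).
  by rewrite !val_insubd !Hlt // => /(Hinj _ _ (ltn_ord x) (ltn_ord y)) e; apply: val_inj.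
rewrite -pvalE; have -> : pval (mkperm N g) = val (mkperm N g) by [].
by rewrite val_insubd inj ffunE val_insubd Hlt.
Qed.

Lemma perm_natf N (s t : 'S_N) : (forall i, i < N -> natf s i = natf t i) -> s = t.
Proof.
move=> H; apply/permP => o; apply: val_inj; have := H _ (ltn_ord o); by rewrite !natfE.
Qed.

Notation bseq a k := (set_nth 0 a k (nth 0 a k).+1).

Definition insP a k (t : 'S_(sumn a)) : 'S_(sumn (bseq a k)) :=
  mkperm _ (insf (pos (natf t) (pref a k) (pref a k.+1 - pref a k)) (natf t)).

Definition delP a k (s : 'S_(sumn (bseq a k))) : 'S_(sumn a) :=
  mkperm _ (delf (pos (natf s) (pref a k) ((pref a k.+1).+1 - pref a k)) (natf s)).

Lemma inb a k q : k < size a ->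
  in_block (bseq a k) k.+1 q.+1 = (pref a k <= q <= pref a k.+1).
Proof.
move=> hk; rewrite /in_block size_incr // !pref_set // ltnn ltnSn /= hk addn0 addn1 ltnS.
by [].
Qed.

Lemma oval_eq n (o : 'I_n) (s : 'S_n) : (s o == o) = (natf s o == o).
Proof. by rewrite natfE. Qed.

Lemma ins_facts a k (hk : k < size a) (t : 'S_(sumn a)) : t \in D a ->
  let p := pos (natf t) (pref a k) (pref a k.+1 - pref a k) in
  [/\ insP k t \in Dhat k.+1 (bseq a k),
      forall q, q < (sumn a).+1 -> natf (insP k t) q = insf p (natf t) q,
      pos (insf p (natf t)) (pref a k) ((pref a k.+1).+1 - pref a k) = p
    & p <= pref a k.+1].
Proof.
move=> hD p.
have /andP [hd /forallP hder] : descents_ok t && [forall i, t i != i]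
  by move: hD; rewrite !inE.
have st := setting_ok a k hk.
have hN := sumn_incr a k hk.
have [/andP [hPE hEn] _ _ _ _] := st.
have gt : goodf (sumn a) (natf t).
  by split; [move=> i hi; exact: natf_lt | move=> i j hi hj; exact: natf_inj].
have td : forall i, i < sumn a -> natf t i != i.
  by move=> i hi; have := hder (Ordinal hi); rewrite oval_eq.
have tdesc : desc (sumn a) (cutb a) (natf t) by move/descP: hd.
have := ins_props _ _ _ _ _ _ st gt td tdesc; rewrite -/p => -[/andP [hp1 hp2] [gl gi] hdesc hfix hpos].
have sE : forall q, q < (sumn a).+1 -> natf (insP k t) q = insf p (natf t) q.
  move=> q hq; rewrite /insP -/p mkpermE // ?hN //.
split => //.
rewrite !inE; apply/andP; split.
  apply/descP => i hi hc; rewrite hN in hi; rewrite !sE; try lia.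
  by apply: hdesc.
apply/andP; split.
  have hpN : p < sumn (bseq a k) by rewrite hN; lia.
  apply/existsP; exists (Ordinal hpN); rewrite oval_eq /= sE; last lia.
  by rewrite hfix ?eqxx ?inb //=; lia.
apply/forallP => o; apply/implyP; rewrite oval_eq sE; last by rewrite -hN.
rewrite hfix; last by rewrite -hN.
by move=> /eqP ->; rewrite inb //; apply/andP.
Qed.

Lemma del_facts a k (hk : k < size a) (s : 'S_(sumn (bseq a k))) :
  s \in Dhat k.+1 (bseq a k) ->
  let p := pos (natf s) (pref a k) ((pref a k.+1).+1 - pref a k) in
  [/\ delP s \in D a,
      forall i, i < sumn a -> natf (delP s) i = delf p (natf s) i,
      pos (delf p (natf s)) (pref a k) (pref a k.+1 - pref a k) = p,
      natf s p = p
    & p <= pref a k.+1 /\ goodf (sumn a).+1 (natf s)].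
Proof.
move=> hS p.
have /andP [hd /andP [/existsP [o /andP [fo io]] /forallP hall]] :
  [&& descents_ok s, [exists i, (s i == i) && in_block (bseq a k) k.+1 i.+1]
    & [forall i, (s i == i) ==> in_block (bseq a k) k.+1 i.+1]]
  by move: hS; rewrite !inE.
have st := setting_ok a k hk.
have hN := sumn_incr a k hk.
have [/andP [hPE hEn] _ _ _ _] := st.
have gu : goodf (sumn a).+1 (natf s).
  split; rewrite -hN; [move=> i hi; exact: natf_lt | move=> i j hi hj; exact: natf_inj].
have udesc : desc (sumn a).+1 (cutb (bseq a k)) (natf s) by rewrite -hN; move/descP: hd.
have uf0 : natf s o = o by apply/eqP; rewrite -oval_eq.
have hf0 : pref a k <= o <= pref a k.+1 by rewrite -inb.
have ufix : forall q, q < (sumn a).+1 -> natf s q = q -> pref a k <= q <= pref a k.+1.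
  move=> q hq e; rewrite -hN in hq.
  have := hall (Ordinal hq); rewrite oval_eq /= e eqxx /= inb //.
have := del_props _ _ _ _ _ _ _ st gu udesc hf0 uf0 ufix; rewrite -/p.
move=> -[ep [gl gi] dder ddesc dpos].
have sE : forall i, i < sumn a -> natf (delP s) i = delf p (natf s) i.
  by move=> i hi; rewrite /delP -/p mkpermE.
rewrite -ep in uf0 hf0.
split => //.
  rewrite !inE; apply/andP; split.
    by apply/descP => i hi hc; rewrite !sE; try lia; apply: ddesc.
  apply/forallP => x; rewrite oval_eq sE //; exact: dder.
by case/andP: hf0.
Qed.

Unset Implicit Arguments.

Theorem mainTheorem10 (a : seq nat) (l : nat) :
  (1 <= l <= size a)%N ->
  exists f : {s : 'S_(sumn a) | s \in D a} ->
             {s : 'S_(sumn (incr_at a l)) | s \in Dhat l (incr_at a l)},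
    bijective f.
Proof.
case: l => [|k] // /andP [_ hk].
rewrite /incr_at /=.
have hN := sumn_incr a k hk.
have [/andP [hPE hEn] _ _ _ _] := setting_ok a k hk.
pose f (x : {s : 'S_(sumn a) | s \in D a}) : {s | s \in Dhat k.+1 (bseq a k)} :=
  exist _ (insP k (val x)) (let: And4 h _ _ _ := ins_facts hk (valP x) in h).
pose g (y : {s | s \in Dhat k.+1 (bseq a k)}) : {s : 'S_(sumn a) | s \in D a} :=
  exist _ (delP (val y)) (let: And5 h _ _ _ _ := del_facts hk (valP y) in h).
exists f; exists g.
- move=> [t ht]; apply: val_inj => /=.
  have [hm1 sE1 pos1 hp1] := ins_facts hk ht.
  have [_ sE2 _ _ [hp2 _]] := del_facts hk hm1.
  apply: perm_natf => i hi; rewrite sE2 //.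
  rewrite (@pos_ext _ (insf (pos (natf t) (pref a k) (pref a k.+1 - pref a k)) (natf t))).
    rewrite pos1 (@delf_ext (sumn a) _ _ (insf (pos (natf t) (pref a k) (pref a k.+1 - pref a k)) (natf t)) i) ?delf_insf //.
  by move=> q hq; rewrite sE1 //; lia.
- move=> [s hs]; apply: val_inj => /=.
  have [hm1 sE1 pos1 up [hp1 gu]] := del_facts hk hs.
  have [_ sE2 _ _] := ins_facts hk hm1.
  apply: perm_natf => q hq; rewrite hN in hq; rewrite sE2 //.
  rewrite (@pos_ext _ (delf (pos (natf s) (pref a k) ((pref a k.+1).+1 - pref a k)) (natf s))).
    rewrite pos1 (@insf_ext (sumn a) _ _ (delf (pos (natf s) (pref a k) ((pref a k.+1).+1 - pref a k)) (natf s)) q) //; try lia.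
      rewrite (insf_delf _ _ _ _ gu) //; lia.
  by move=> i hi; rewrite sE1 //; lia.
Qed.
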